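(* Let $\mathcal{D}$ be a derivation in one of the proof systems $\mathbf{Reg}$, $\mathbf{Reg}^{+}$ or $\mathbf{Reg}^{+}_{0}$, possibly with open marked assumptions. Then for every instance $\iota$ of the rule (FIX) in $\mathcal{D}$ the following holds: every thread in $\mathcal{D}$ from the conclusion of $\iota$ upwards to a marked assumption that is discharged at $\iota$ passes at least one instance of the rule $(\lambda)$ or of the rule $(@)$.
   Context: Infinite $\lambda$-terms are possibly infinite terms built from variables, abstractions $\lambda y.M$ and applications $M\,N$, considered modulo $\alpha$-equivalence. A prefixed term is an expression $\lambda x_1\ldots x_n.M$ ($n\ge 0$, distinct variables, written as a separate abstraction prefix; $\lambda.M$ for the empty prefix) where $M$ is an infinite $\lambda$-term whose free variables are among $x_1,\dots,x_n$. Derivations are finite natural-deduction style proof trees whose formulas are prefixed terms; a thread is a path in the tree. The system $\mathbf{Reg}^{+}$ has: axiom (nlvar) $\lambda\vec{x}y.y$; rule $(\lambda)$: from $\lambda\vec{x}y.M_0$ infer $\lambda\vec{x}.\lambda y.M_0$; rule $(@)$: from $\lambda\vec{x}.M_0$ and $\lambda\vec{x}.M_1$ infer $\lambda\vec{x}.(M_0\,M_1)$; rule $(\mathrm{del}^{+})$: from $\lambda x_1\ldots x_{n-1}.M$ infer $\lambda x_1\ldots x_n.M$, provided $x_n$ does not occur free in $M$; rule (FIX,$u$): if $\mathcal{D}_0$ is a derivation of $\lambda\vec{x}.M$ that may contain open assumption leaves $[\lambda\vec{x}.M]^u$ marked with $u$, infer $\lambda\vec{x}.M$, discharging these assumptions,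 provided $\mathcal{D}_0$ has depth $\ge 1$ (contains at least one rule instance). The system $\mathbf{Reg}^{+}_0$ has the same axioms and rules, but every instance of (FIX,$u$) must additionally satisfy: every prefixed term $\lambda\vec{y}.N$ occurring on a thread in $\mathcal{D}_0$ from an open marked assumption $(\lambda\vec{x}.M)^u$ downwards has $|\vec{y}|\ge|\vec{x}|$. The system $\mathbf{Reg}$ differs from $\mathbf{Reg}^{+}$ in that the axiom is restricted to $\lambda y.y$ (one-variable prefix) and the rule $(\mathrm{del}^{+})$ is replaced by $(\mathrm{del})$: from $\lambda x_1\ldots x_{i-1}x_{i+1}\ldots x_n.M$ infer $\lambda x_1\ldots x_n.M$, provided $x_i$ does not occur free in $M$. *)

(* Defs.v *)
(* Infinite lambda-terms modulo alpha-equivalence are represented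
   as coinductive locally-nameless/de Bruijn terms, compared by bisimilarity. *)
From Stdlib Require Import List Arith.
Import ListNotations.

CoInductive iterm : Type :=
| IVar (k : nat)
| ILam (t : iterm)
| IApp (t u : iterm).

CoInductive bisim : iterm -> iterm -> Prop :=
| bisim_var k : bisim (IVar k) (IVar k)
| bisim_lam t t' : bisim t t' -> bisim (ILam t) (ILam t')
| bisim_app t u t' u' : bisim t t' -> bisim u u' -> bisim (IApp t u) (IApp t' u').

Inductive free : nat -> iterm -> Prop :=
| free_var k : free k (IVar k)
| free_lam k t : free (S k) t -> free k (ILam t)
| free_appl k t u : free k t -> free k (IApp t u)
| free_appr k t u : free k u -> free k (IApp t u).

CoFixpoint shift (c : nat) (t : iterm) : iterm :=
  match t with
  | IVar k => if Nat.ltb k c then IVar k else IVar (S k)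
  | ILam t' => ILam (shift (S c) t')
  | IApp t1 t2 => IApp (shift c t1) (shift c t2)
  end.

(* A prefixed term  lambda x_1 ... x_n . M  is a pair (n, M); inside M the
   prefix variable x_i is the de Bruijn index (n - i), so x_n is index 0. *)
Definition pterm : Type := (nat * iterm)%type.
Definition plen (A : pterm) : nat := fst A.
Definition pbody (A : pterm) : iterm := snd A.

Definition wf_pterm (A : pterm) : Prop := forall k, free k (pbody A) -> k < plen A.

Definition peq (A B : pterm) : Prop := plen A = plen B /\ bisim (pbody A) (pbody B).

Inductive deriv : Type :=
| DAx  (A : pterm)
| DHyp (u : nat) (A : pterm)
| DLam (A : pterm) (d : deriv)
| DApp (A : pterm) (d0 d1 : deriv)
| DDel (A : pterm) (d : deriv)
| DFix (u : nat) (A : pterm) (d : deriv) .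

Definition concl (d : deriv) : pterm :=
  match d with
  | DAx A | DHyp _ A | DLam A _ | DApp A _ _ | DDel A _ | DFix _ A _ => A
  end.

Definition children (d : deriv) : list deriv :=
  match d with
  | DAx _ | DHyp _ _ => []
  | DLam _ d | DDel _ d | DFix _ _ d => [d]
  | DApp _ d0 d1 => [d0; d1]
  end.

Fixpoint sub (d : deriv) (p : list nat) : option deriv :=
  match p with
  | [] => Some d
  | i :: p' => match nth_error (children d) i with
               | Some c => sub c p'
               | None => None
               end
  end.

Definition is_fix_u (u : nat) (o : option deriv) : Prop :=
  match o with Some (DFix v _ _) => v = u | _ => False end.

Definition is_lam_or_app (o : option deriv) : Prop :=
  match o with Some (DLam _ _) | Some (DApp _ _ _) => True | _ => False end.

(* These are exactly the assumptions that
   a (FIX,u) instance with premise derivation d discharges. *)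
Definition open_hyp (u : nat) (d : deriv) (q : list nat) : Prop :=
  (exists B, sub d q = Some (DHyp u B)) /\
  (forall k, k < length q -> ~ is_fix_u u (sub d (firstn k q))).

Inductive system : Type := Reg | RegPlus | RegPlus0.

Fixpoint valid (sys : system) (d : deriv) : Prop :=
  match d with
  | DAx A =>
      wf_pterm A /\ bisim (pbody A) (IVar 0) /\
      match sys with
      | Reg => plen A = 1                      (* lambda y. y *)
      | _ => 1 <= plen A                       (* lambda x1..xn y. y *)
      end
  | DHyp _ A => wf_pterm A
  | DLam A d0 =>
      valid sys d0 /\ wf_pterm A /\
      plen (concl d0) = S (plen A) /\ bisim (pbody A) (ILam (pbody (concl d0)))
  | DApp A d0 d1 =>
      valid sys d0 /\ valid sys d1 /\ wf_pterm A /\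
      plen (concl d0) = plen A /\ plen (concl d1) = plen A /\
      bisim (pbody A) (IApp (pbody (concl d0)) (pbody (concl d1)))
  | DDel A d0 =>
      valid sys d0 /\ wf_pterm A /\
      S (plen (concl d0)) = plen A /\
      match sys with
      | Reg =>
          (* delete x_i (1 <= i <= n), i.e. de Bruijn index c = n - i < n *)
          exists c, c < plen A /\ ~ free c (pbody A) /\
                    bisim (pbody A) (shift c (pbody (concl d0)))
      | _ =>
          (* delete the last variable x_n, de Bruijn index 0 *)
          ~ free 0 (pbody A) /\ bisim (pbody A) (shift 0 (pbody (concl d0)))
      end
  | DFix u A d0 =>
      valid sys d0 /\ wf_pterm A /\
      (* depth of the premise derivation >= 1 *)
      (match d0 with DAx _ | DHyp _ _ => False | _ => True end) /\
      peq (concl d0) A /\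
      (forall q B, open_hyp u d0 q -> sub d0 q = Some (DHyp u B) -> peq B A) /\
      match sys with
      | RegPlus0 =>
          forall q, open_hyp u d0 q ->
            forall k e, k <= length q -> sub d0 (firstn k q) = Some e ->
                        plen A <= plen (concl e)
      | _ => True
      end
  end.

(* Main.v *)
Require Import Defs.
From Stdlib Require Import List Arith Lia.
Import ListNotations.

Lemma valid_sub sys : forall p D d, valid sys D -> sub D p = Some d -> valid sys d.
Proof.
  induction p as [|i p IH]; intros D d HV Hs; simpl in Hs.
  - inversion Hs; subst; auto.
  - destruct D; simpl in *.
    + destruct i; discriminate.
    + destruct i; discriminate.
    + destruct i as [|[]]; simpl in Hs; try discriminate. eapply IH; [|eauto]; tauto.
    + destruct i as [|[|[]]]; simpl in Hs; try discriminate; eapply IH; try eassumption; tauto.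
    + destruct i as [|[]]; simpl in Hs; try discriminate. eapply IH; [|eauto]; tauto.
    + destruct i as [|[]]; simpl in Hs; try discriminate. eapply IH; [|eauto]; tauto.
Qed.

Lemma Lkey sys u B : forall q d, q <> [] -> valid sys d -> sub d q = Some (DHyp u B) ->
  (exists k, k < length q /\ is_lam_or_app (sub d (firstn k q))) \/ plen B < plen (concl d).
Proof.
  induction q as [|i q IH]; intros d Hne HV Hs; [congruence|].
  destruct d; simpl in Hs.
  - destruct i; discriminate.
  - destruct i; discriminate.
  - left. exists 0. simpl. split; [lia|exact I].
  - left. exists 0. simpl. split; [lia|exact I].
  - destruct i as [|[]]; simpl in Hs; try discriminate.
    simpl in HV. destruct HV as [HV1 [_ [Hl _]]]. simpl.
    destruct q as [|j q'].
    + simpl in Hs. inversion Hs; subst. simpl in Hl. right. unfold plen in *. simpl in *. lia.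
    + destruct (IH d (ltac:(congruence)) HV1 Hs) as [[k [Hk Hk2]]|Hlt].
      * left. exists (S k). simpl. simpl in Hk. split; [lia|exact Hk2].
      * right. unfold plen in *. simpl in *. lia.
  - destruct i as [|[]]; simpl in Hs; try discriminate.
    simpl in HV. destruct HV as [HV1 [_ [Hdep [[Hpl _] _]]]]. simpl.
    destruct q as [|j q'].
    + simpl in Hs. inversion Hs; subst. contradiction.
    + destruct (IH d (ltac:(congruence)) HV1 Hs) as [[k [Hk Hk2]]|Hlt].
      * left. exists (S k). simpl. simpl in Hk. split; [lia|exact Hk2].
      * right. simpl. rewrite <- Hpl. exact Hlt.
Qed.

Theorem mainTheorem1 :
  forall (sys : system) (D : deriv), valid sys D ->
  forall (p : list nat) (u : nat) (A : pterm) (d0 : deriv),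
    sub D p = Some (DFix u A d0) ->
    forall q : list nat, open_hyp u d0 q ->
    exists k, k <= length q /\ is_lam_or_app (sub d0 (firstn k q)).
Proof.
  intros sys D HV p u A d0 Hs q Hq.
  pose proof (valid_sub sys p D _ HV Hs) as HF. simpl in HF.
  destruct HF as [HV0 [_ [Hdep [[Hpl _] [Hdis _]]]]].
  destruct Hq as [[B HB] Hq2].
  assert (HBA := Hdis q B (conj (ex_intro _ B HB) Hq2) HB).
  destruct HBA as [HBA _].
  destruct q as [|j q'].
  - simpl in HB. inversion HB; subst. contradiction.
  - destruct (Lkey sys u B (j :: q') d0 ltac:(congruence) HV0 HB) as [[k [Hk Hk2]]|Hlt].
    + exists k. split; [apply Nat.lt_le_incl; exact Hk|exact Hk2].
    + exfalso. unfold plen in *. lia.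
Qed.
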